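(* Let $\kappa$ be a regular infinite cardinal, $I$ a nonempty set of players, and $(S,\Sigma_S)$ a $\kappa$-measurable space separating points of $S$. With $\Omega$, $\Sigma_\Omega$, $T_i^*$, $\theta^*$ as in the context, $\langle\Omega,\Sigma_\Omega,(T_i^* )_{i\in I},\theta^*\rangle$ is a $\kappa$-type space on $S$ for player set $I$.
   Context: A $\kappa$-field on a nonempty set $M$ is a field of subsets closed under intersections of fewer than $\kappa$ members; $(M,\Sigma)$ is then $\kappa$-measurable. $\Delta^\kappa(M,\Sigma)$ is the set of finitely additive probability measures on $(M,\Sigma)$, with the $\kappa$-field generated by the sets $\{\mu:\mu(E)\ge p\}$, $E\in\Sigma$, $p\in[0,1]$. ''Separating points'' means: for all $s\neq s'$ in $S$ there is $E\in\Sigma_S$ with $s\in E$, $s'\notin E$. A $\kappa$-type space on $S$ for $I$ is $\langle M,\Sigma,(T_i)_{i\in I},\theta\rangle$ with $M$ nonempty, $\Sigma$ a $\kappa$-field on $M$, each $T_i:M\to\Delta^\kappa(M,\Sigma)$ measurable such that for all $m\in M$, $A\in\Sigma$: $\{m':T_i(m')=T_i(m)\}\subseteq A$ implies $T_i(m)(A)=1$; and $\theta:M\to S$ measurable. $\kappa$-expressions $\Phi^\kappa$: least set containing every $E\in\Sigma_S$ and closed under $\neg\varphi$, $B_i^p(\varphi)$ ($i\in I$, $p\in[0,1]$), and $\bigwedge_{\varphi\in\Psi}\varphi$ for nonempty $\Psi$ with $|\Psi|<\kappa$. In a $\kappa$-type space: $E^{\underline M}=\theta^{-1}(E)$, $(\neg\varphi)^{\underline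 M}=M\setminus\varphi^{\underline M}$, $(B_i^p\varphi)^{\underline M}=\{m:T_i(m)(\varphi^{\underline M})\ge p\}$, $(\bigwedge\Psi)^{\underline M}=\bigcap_{\varphi\in\Psi}\varphi^{\underline M}$. $D(m)=\{\varphi:m\in\varphi^{\underline M}\}$. $\Omega$ = set of all $D(m)$ over all $\kappa$-type spaces on $S$ for $I$ and all their states; $[\varphi]=\{\omega\in\Omega:\varphi\in\omega\}$, $\Sigma_\Omega=\{[\varphi]:\varphi\in\Phi^\kappa\}$. $T_i^*(\omega)([\varphi])=\sup\{p\in[0,1]:B_i^p(\varphi)\in\omega\}$ (equal to $T_i(m)(\varphi^{\underline M})$ for any $m$ in any $\kappa$-type space with $D(m)=\omega$), and $\theta^*(\omega)$ is the unique $s\in S$ belonging to every $E\in\Sigma_S\cap\omega$ (equal to $\theta(m)$ for any such $m$). *)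

(* Defs.v *)
From HB Require Import structures.
From mathcomp Require Import all_boot all_order all_algebra.
From mathcomp Require Import all_classical all_reals.
From mathcomp Require Import Rstruct.
Import Order.TTheory GRing.Theory Num.Theory.
Local Open Scope classical_set_scope.
Local Open Scope ring_scope.

Notation R := Rdefinitions.R.

(* Cardinals are represented by a type K (standing for the cardinal |K|).   *)
Definition card_lt_K (K : Type) (T : Type) (A : set T) : Prop :=
  card_le A [set: K] /\ ~ card_le [set: K] A.

Definition regular_infinite (K : Type) : Prop :=
  infinite_set [set: K] /\
  forall (J : set K) (F : K -> set K),
    card_lt_K K K J -> (forall j, J j -> card_lt_K K K (F j)) ->
    card_lt_K K K (\bigcup_(j in J) F j).

Definition kfield (K : Type) (M : Type) (Sig : set (set M)) : Prop :=
  [/\ Sig setT,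
      (forall A, Sig A -> Sig (~` A)),
      (forall A B, Sig A -> Sig B -> Sig (A `|` B)) &
      (forall F : set (set M), card_lt_K K (set M) F -> F `<=` Sig ->
         Sig (\bigcap_(A in F) A))].

Definition gen_kfield (K : Type) (M : Type) (G : set (set M)) : set (set M) :=
  fun A => forall Sig', kfield K M Sig' -> G `<=` Sig' -> Sig' A.

Definition fa_prob (M : Type) (Sig : set (set M)) (mu : set M -> R) : Prop :=
  [/\ forall E, Sig E -> 0 <= mu E,
      mu setT = 1 &
      forall A B, Sig A -> Sig B -> A `&` B = set0 -> mu (A `|` B) = mu A + mu B].

(* Delta^kappa(M, Sig): measures are functions set M -> R; only their      *)
(* values on Sig matter (see the introspection clause below).               *)
Definition Delta (M : Type) (Sig : set (set M)) := {mu : set M -> R | fa_prob M Sig mu}.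

Definition Delta_gen (M : Type) (Sig : set (set M)) : set (set (Delta M Sig)) :=
  [set B | exists E p, Sig E /\ 0 <= p <= 1 /\ B = [set mu : Delta M Sig | p <= sval mu E]].

Definition Delta_kfield (K : Type) (M : Type) (Sig : set (set M)) : set (set (Delta M Sig)) :=
  gen_kfield K (Delta M Sig) (Delta_gen M Sig).

Definition is_type_space (K S I : Type) (SigS : set (set S))
    (M : Type) (Sig : set (set M)) (T : I -> M -> Delta M Sig) (theta : M -> S) : Prop :=
  [/\ (exists m : M, True),
      kfield K M Sig,
      (forall i B, Delta_kfield K M Sig B -> Sig (T i @^-1` B)),
      (forall i m A, Sig A ->
          [set m' | forall E, Sig E -> sval (T i m') E = sval (T i m) E] `<=` A ->
          sval (T i m) A = 1) &
      (forall E, SigS E -> Sig (theta @^-1` E))].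

(* Raw syntax of expressions.  A conjunction is given by a set P of indices *)
(* in K together with a family g; it denotes /\_{k in P} g k.               *)
Inductive kexpr (K S I : Type) : Type :=
| Atom : set S -> kexpr K S I
| Neg : kexpr K S I -> kexpr K S I
| Bel : I -> R -> kexpr K S I -> kexpr K S I
| Conj : set K -> (K -> kexpr K S I) -> kexpr K S I.
Arguments Atom {K S I}.
Arguments Neg {K S I}.
Arguments Bel {K S I}.
Arguments Conj {K S I}.

Fixpoint wff (K S I : Type) (SigS : set (set S)) (f : kexpr K S I) : Prop :=
  match f with
  | Atom E => SigS E
  | Neg g => wff K S I SigS g
  | Bel _ p g => 0 <= p <= 1 /\ wff K S I SigS g
  | Conj P g => P !=set0 /\ card_lt_K K K P /\ forall k, P k -> wff K S I SigS (g k)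
  end.

Fixpoint sem (K S I : Type) (M : Type) (Sig : set (set M))
    (T : I -> M -> Delta M Sig) (theta : M -> S) (f : kexpr K S I) : set M :=
  match f with
  | Atom E => theta @^-1` E
  | Neg g => ~` sem K S I M Sig T theta g
  | Bel i p g => [set m | p <= sval (T i m) (sem K S I M Sig T theta g)]
  | Conj P g => \bigcap_(k in P) sem K S I M Sig T theta (g k)
  end.

Definition Dm (K S I : Type) (SigS : set (set S)) (M : Type) (Sig : set (set M))
    (T : I -> M -> Delta M Sig) (theta : M -> S) (m : M) : set (kexpr K S I) :=
  [set f | wff K S I SigS f /\ sem K S I M Sig T theta f m].

Definition Omega (K S I : Type) (SigS : set (set S)) : set (set (kexpr K S I)) :=
  [set w | exists (M : Type) (Sig : set (set M)) (T : I -> M -> Delta M Sig)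
             (theta : M -> S) (m : M),
             is_type_space K S I SigS M Sig T theta /\ w = Dm K S I SigS M Sig T theta m].

Definition OmegaT (K S I : Type) (SigS : set (set S)) :=
  {w : set (kexpr K S I) | Omega K S I SigS w}.

Definition bracket (K S I : Type) (SigS : set (set S)) (f : kexpr K S I)
  : set (OmegaT K S I SigS) := [set w | sval w f].

Definition SigmaOmega (K S I : Type) (SigS : set (set S)) : set (set (OmegaT K S I SigS)) :=
  [set A | exists f : kexpr K S I, wff K S I SigS f /\ A = bracket K S I SigS f].

Definition separates_points (S : Type) (SigS : set (set S)) : Prop :=
  forall s s' : S, s <> s' -> exists E, SigS E /\ E s /\ ~ E s'.

(* Main.v *)
Require Import Defs.
From HB Require Import structures.
From mathcomp Require Import all_boot all_order all_algebra.
From mathcomp Require Import all_classical all_reals.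
From mathcomp Require Import Rstruct.
Import Order.TTheory GRing.Theory Num.Theory.
Local Open Scope classical_set_scope.
Local Open Scope ring_scope.

Lemma card_img (K T U : Type) (A : set T) (f : T -> U) :
  card_lt_K K T A -> card_lt_K K U (f @` A).
Proof.
case=> h1 h2; split; first exact: card_le_trans (card_image_le f A) h1.
by move=> h; apply: h2; exact: card_le_trans h (card_image_le f A).
Qed.

Lemma fin_lt (K T : Type) (A : set T) :
  infinite_set [set: K] -> finite_set A -> card_lt_K K T A.
Proof.
move=> inf fin; split.
- have [n hn] := (finite_set_leP A).1 fin.
  apply: card_le_trans hn _.
  apply: card_le_trans (subset_card_le (@subsetT nat `I_n)) _.
  exact/infiniteP.
- by move=> h; apply: inf; exact: card_le_finite h fin.
Qed.

Lemma inj_of_le T U (A : set T) (u0 : U) : card_le A [set: U] ->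
  exists iota : T -> U, forall a b, A a -> A b -> iota a = iota b -> a = b.
Proof.
move=> /card_leP[h].
exists (fun a => match pselect (A a) with
                 | left p => val (h (SigSub (mem_set p)))
                 | right _ => u0 end).
move=> a b Aa Ab; case: pselect => // pa; case: pselect => // pb e.
have : SigSub (mem_set pa) = SigSub (mem_set pb) :> A.
  by apply: 'inj_h; rewrite ?in_setT //; exact: val_inj.
by move=> /(congr1 val).
Qed.

Lemma fa_le1 (K M : Type) (Sig : set (set M)) mu E :
  kfield K M Sig -> fa_prob M Sig mu -> Sig E -> 0 <= mu E <= 1.
Proof.
case=> _ hC _ _ [h0 h1 hadd] hE; apply/andP; split; first exact: h0.
have := hadd E (~` E) hE (hC _ hE) (setICr E).
rewrite setUCr h1 => ->.
by rewrite lerDl; apply: h0; apply: hC.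
Qed.

Lemma sup_itv (v : R) : 0 <= v <= 1 -> sup [set p : R | 0 <= p <= 1 /\ p <= v] = v.
Proof.
move=> /andP[v0 v1]; apply/eqP; rewrite eq_le; apply/andP; split.
- apply: ge_sup; first by exists 0; split=> //; rewrite lexx ler01.
  by move=> p [_ ->].
- apply: sup_upper_bound; last by split=> //; rewrite v0 v1.
  split; first by exists 0; split=> //; rewrite lexx ler01.
  by exists 1 => p [/andP[_ ->]].
Qed.

Lemma sem_meas (K S I : Type) (SigS : set (set S)) (M : Type) (Sig : set (set M))
  (T : I -> M -> Delta M Sig) (th : M -> S) :
  is_type_space K S I SigS M Sig T th ->
  forall f, wff K S I SigS f -> Sig (sem K S I M Sig T th f).
Proof.
case=> _ kf Tm _ thm.
have [_ hC _ hI] := kf.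
elim=> [E|g IH|i p g IH|P g IH] /=.
- exact: thm.
- by move=> /IH; apply: hC.
- case=> hp /IH hg.
  apply: (Tm i [set mu : Delta M Sig | p <= sval mu (sem K S I M Sig T th g)]).
  move=> Sig' _ sub; apply: sub; exists (sem K S I M Sig T th g), p; by split.
- case=> _ [hP hg].
  rewrite -(bigcap_image P (fun k => sem K S I M Sig T th (g k)) id).
  apply: hI; first exact: card_img.
  by move=> X [k Pk <-]; apply: IH; apply: hg.
Qed.

Arguments sem_meas {K S I SigS M Sig T th}.

Lemma Dm_Omega (K S I : Type) (SigS : set (set S)) (M : Type) (Sig : set (set M))
  (T : I -> M -> Delta M Sig) (th : M -> S) m :
  is_type_space K S I SigS M Sig T th -> Omega K S I SigS (Dm K S I SigS M Sig T th m).
Proof. by move=> ts; exists M, Sig, T, th, m. Qed.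

Definition phiM (K S I : Type) (SigS : set (set S)) (M : Type) (Sig : set (set M))
  (T : I -> M -> Delta M Sig) (th : M -> S) (ts : is_type_space K S I SigS M Sig T th) (m : M)
  : OmegaT K S I SigS := exist _ _ (Dm_Omega K S I SigS M Sig T th m ts).

Lemma semE (K S I : Type) (SigS : set (set S)) (M : Type) (Sig : set (set M))
  (T : I -> M -> Delta M Sig) (th : M -> S) (ts : is_type_space K S I SigS M Sig T th) f :
  wff K S I SigS f ->
  sem K S I M Sig T th f = phiM K S I SigS M Sig T th ts @^-1` bracket K S I SigS f.
Proof.
move=> wf; apply/funext => m; apply/propext; rewrite /preimage /bracket /= /Dm /=.
by split; [|case].
Qed.

Arguments semE {K S I SigS M Sig T th}.

Definition Tval (K S I : Type) (SigS : set (set S)) (i : I) (w : OmegaT K S I SigS)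
  (A : set (OmegaT K S I SigS)) : R :=
  sup [set p : R | (0 <= p <= 1) /\ exists f, wff K S I SigS f /\ A = bracket K S I SigS f
                                     /\ sval w (Bel i p f)].

Lemma val_eq (K S I : Type) (SigS : set (set S)) (M : Type) (Sig : set (set M))
  (T : I -> M -> Delta M Sig) (th : M -> S) (ts : is_type_space K S I SigS M Sig T th)
  i (w : OmegaT K S I SigS) m f :
  sval w = Dm K S I SigS M Sig T th m -> wff K S I SigS f ->
  Tval K S I SigS i w (bracket K S I SigS f) = sval (T i m) (sem K S I M Sig T th f) /\
  sup [set p : R | 0 <= p <= 1 /\ sval w (Bel i p f)] = sval (T i m) (sem K S I M Sig T th f).
Proof.
move=> hw wf.
have hv : 0 <= sval (T i m) (sem K S I M Sig T th f) <= 1.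
  have [_ kf _ _ _] := ts.
  exact: (@fa_le1 K M Sig _ _ kf) (svalP (T i m)) (sem_meas ts _ wf).
rewrite -(sup_itv _ hv); split; congr sup; apply/funext => p; apply/propext;
  rewrite hw /Dm /=; split.
- case=> hp [g [wg [eq [_ hg]]]]; split=> //.
  by rewrite (semE ts _ wf) eq -(semE ts _ wg).
- by case=> hp hle; split=> //; exists f; split=> //; split=> //; split=> //; split.
- by case=> hp [_ hle]; split.
- by case=> hp hle; split=> //; split=> //; split.
Qed.
Arguments val_eq {K S I SigS M Sig T th}.

Lemma w_Neg (K S I : Type) (SigS : set (set S)) (w : OmegaT K S I SigS) f :
  wff K S I SigS f -> (sval w (Neg f) <-> ~ sval w f).
Proof.
move=> wf; have [M [Sig [T [th [m [ts ->]]]]]] := svalP w.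
rewrite /Dm /=; split; first by case=> _ h [].
by move=> h; split=> // hs; apply: h.
Qed.

Lemma w_Conj (K S I : Type) (SigS : set (set S)) (w : OmegaT K S I SigS) P g :
  wff K S I SigS (Conj P g) -> (sval w (Conj P g) <-> forall k, P k -> sval w (g k)).
Proof.
move=> wf; have [M [Sig [T [th [m [ts ->]]]]]] := svalP w.
have [_ [_ wg]] := wf.
rewrite /Dm /=; split; first by case=> _ h k Pk; split; [apply: wg|apply: h].
by move=> h; split=> // k Pk; case: (h k Pk).
Qed.

Lemma thst_ex (K S I : Type) (SigS : set (set S)) (w : OmegaT K S I SigS) :
  exists s : S, forall E, SigS E -> sval w (Atom E) -> E s.
Proof.
have [M [Sig [T [th [m [ts ->]]]]]] := svalP w.
by exists (th m) => E _ [].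
Qed.

Definition thst (K S I : Type) (SigS : set (set S)) (w : OmegaT K S I SigS) : S :=
  proj1_sig (cid (thst_ex K S I SigS w)).

Lemma thst_eq (K S I : Type) (SigS : set (set S)) (M : Type) (Sig : set (set M))
  (T : I -> M -> Delta M Sig) (th : M -> S) (w : OmegaT K S I SigS) m :
  separates_points S SigS ->
  sval w = Dm K S I SigS M Sig T th m -> thst K S I SigS w = th m.
Proof.
move=> sep hw.
rewrite /thst; case: cid => s hs /=.
case: (pselect (s = th m)) => // ne.
have [E [SE [Em nEs]]] := sep (th m) s (nesym ne).
exfalso; apply: nEs; apply: hs => //; rewrite /= hw; by split.
Qed.

Lemma w_Atom (K S I : Type) (SigS : set (set S)) (w : OmegaT K S I SigS) E :
  separates_points S SigS ->
  (sval w (Atom E) <-> SigS E /\ E (thst K S I SigS w)).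
Proof.
move=> sep; have [M [Sig [T [th [m [ts hw]]]]]] := svalP w.
by rewrite (thst_eq _ _ _ _ _ _ _ _ w m sep hw) hw.
Qed.

Definition code (K S I : Type) (SigS : set (set S)) (A : set (OmegaT K S I SigS)) : kexpr K S I :=
  match pselect (SigmaOmega K S I SigS A) with
  | left h => proj1_sig (cid h)
  | right _ => Atom setT
  end.

Lemma code_spec (K S I : Type) (SigS : set (set S)) (A : set (OmegaT K S I SigS)) :
  SigmaOmega K S I SigS A ->
  wff K S I SigS (code K S I SigS A) /\ A = bracket K S I SigS (code K S I SigS A).
Proof. by rewrite /code; case: pselect => // h _; exact: (proj2_sig (cid h)). Qed.

Lemma SO_top (K S I : Type) (SigS : set (set S)) :
  kfield K S SigS -> SigmaOmega K S I SigS setT.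
Proof.
case=> hT _ _ _; exists (Atom setT); split=> //.
apply/funext => w; apply/propext; split=> // _; rewrite /bracket.
have [M [Sig [T [th [m [ts hw]]]]]] := svalP w.
rewrite /= hw; by split.
Qed.

Lemma SO_C (K S I : Type) (SigS : set (set S)) (A : set (OmegaT K S I SigS)) :
  SigmaOmega K S I SigS A -> SigmaOmega K S I SigS (~` A).
Proof.
move=> [f [wf ->]]; exists (Neg f); split=> //.
apply/funext => w; apply/propext; rewrite /bracket /setC /=.
exact: iff_sym (w_Neg _ _ _ _ w f wf).
Qed.

Lemma SO_I (K S I : Type) (SigS : set (set S)) :
  kfield K S SigS -> infinite_set [set: K] ->
  forall F : set (set (OmegaT K S I SigS)),
  card_lt_K K _ F -> F `<=` SigmaOmega K S I SigS -> SigmaOmega K S I SigS (\bigcap_(A in F) A).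
Proof.
move=> kS inf F [cF1 cF2] sub.
case: (pselect (F !=set0)) => [[A0 FA0]|nF]; last first.
  rewrite (_ : \bigcap_(A in F) A = setT); first exact: SO_top.
  apply/funext=> w; apply/propext; split=> // _ X FX; exfalso; apply: nF; by exists X.
have [k0 _] := infinite_setN0 inf.
have [iota iinj] := inj_of_le _ _ _ k0 cF1.
pose P := iota @` F.
have pre_ex : forall k, {A | P k -> F A /\ iota A = k}.
  move=> k; case: (pselect (P k)) => [Pk|nPk]; last by exists A0.
  have /cid [A [FA eA]] : exists A, F A /\ iota A = k by case: Pk => A FA <-; exists A.
  by exists A.
pose pre k := proj1_sig (pre_ex k).
have preP : forall k, P k -> F (pre k) /\ iota (pre k) = k := fun k => proj2_sig (pre_ex k).
pose g k := code K S I SigS (pre k).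
have wg : forall k, P k -> wff K S I SigS (g k) /\ pre k = bracket K S I SigS (g k).
  by move=> k Pk; apply: code_spec; apply: sub; case: (preP k Pk).
have wC : wff K S I SigS (Conj P g).
  split; first by exists (iota A0), A0.
  split; first by apply: card_img; split.
  by move=> k Pk; case: (wg k Pk).
exists (Conj P g); split=> //.
apply/funext=> w; apply/propext; rewrite /bracket /=; split.
- move=> h; apply/(w_Conj _ _ _ _ w P g wC) => k Pk.
  have [_ e] := wg k Pk.
  have := h (pre k) (proj1 (preP k Pk)); rewrite {1}e; exact.
- move=> /(w_Conj _ _ _ _ w P g wC) h A FA.
  have PA : P (iota A) by exists A.
  have [Fp ep] := preP _ PA.
  have <- : pre (iota A) = A by apply: iinj.
  have [_ e] := wg _ PA; rewrite e; exact: h.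
Qed.

Lemma SO_kfield (K S I : Type) (SigS : set (set S)) :
  kfield K S SigS -> infinite_set [set: K] ->
  kfield K (OmegaT K S I SigS) (SigmaOmega K S I SigS).
Proof.
move=> kS inf; split.
- exact: SO_top.
- exact: SO_C.
- move=> A B SA SB.
  have -> : A `|` B = ~` \bigcap_(X in [set ~` A; ~` B]) X.
    apply/funext => w; apply/propext; split.
    + move=> h /= H; case: h => h.
      * by apply: (H (~` A)) => //; left.
      * by apply: (H (~` B)) => //; right.
    + move=> /= h; case: (pselect (A w)) => [|nA]; first by left.
      case: (pselect (B w)) => [|nB]; first by right.
      by exfalso; apply: h => X [->|->].
  apply: SO_C; apply: SO_I => //.
  + by apply: fin_lt => //; apply: finite_set2.
  + by move=> X [->|->]; apply: SO_C.
- by move=> F cF sF; apply: SO_I.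
Qed.

Lemma Tval_fa (K S I : Type) (SigS : set (set S)) (kS : kfield K S SigS)
  (inf : infinite_set [set: K]) i w :
  fa_prob (OmegaT K S I SigS) (SigmaOmega K S I SigS) (Tval K S I SigS i w).
Proof.
have [M [Sig [T [th [m [ts hw]]]]]] := svalP w.
have [_ kf _ _ _] := ts.
have val : forall f, wff K S I SigS f ->
    Tval K S I SigS i w (bracket K S I SigS f) = sval (T i m) (sem K S I M Sig T th f)
  := fun f wf => proj1 (val_eq ts i w m f hw wf).
have [h0 h1 hadd] := svalP (T i m).
split.
- move=> E [f [wf ->]]; rewrite val //; apply: h0; exact: sem_meas ts _ wf.
- have [f [wf e]] := SO_top K S I SigS kS.
  rewrite e val // -h1; congr (sval (T i m)).
  by rewrite (semE ts _ wf) -e preimage_setT.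
- move=> A B [f [wf ->]] [g [wg ->]] disj.
  have [_ _ hU _] := SO_kfield K S I SigS kS inf.
  have [h [wh e]] := hU _ _ (ex_intro _ f (conj wf erefl)) (ex_intro _ g (conj wg erefl)).
  rewrite e !val //.
  have -> : sem K S I M Sig T th h = sem K S I M Sig T th f `|` sem K S I M Sig T th g.
    by rewrite (semE ts _ wh) (semE ts _ wf) (semE ts _ wg) -e preimage_setU.
  apply: hadd; [exact: sem_meas ts _ wf|exact: sem_meas ts _ wg|].
  by rewrite (semE ts _ wf) (semE ts _ wg) -preimage_setI disj preimage_set0.
Qed.

Definition Tst (K S I : Type) (SigS : set (set S)) (kS : kfield K S SigS)
  (inf : infinite_set [set: K]) (i : I) (w : OmegaT K S I SigS)
  : Delta (OmegaT K S I SigS) (SigmaOmega K S I SigS) :=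
  exist _ (Tval K S I SigS i w) (Tval_fa K S I SigS kS inf i w).

Lemma Tst_meas (K S I : Type) (SigS : set (set S)) (kS : kfield K S SigS)
  (inf : infinite_set [set: K]) i B :
  Delta_kfield K _ (SigmaOmega K S I SigS) B ->
  SigmaOmega K S I SigS (Tst K S I SigS kS inf i @^-1` B).
Proof.
move=> hB; apply: (hB [set B | SigmaOmega K S I SigS (Tst K S I SigS kS inf i @^-1` B)]).
- have [hT hC hU hI] := SO_kfield K S I SigS kS inf; split.
  + by rewrite /= preimage_setT.
  + move=> X /=; rewrite preimage_setC; exact: hC.
  + move=> X Y /= ? ?; rewrite preimage_setU; exact: hU.
  + move=> F cF sF /=; rewrite preimage_bigcap.
    rewrite -(bigcap_image F (preimage (Tst K S I SigS kS inf i)) id).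
    apply: hI; first exact: card_img.
    by move=> X [Y FY <-]; apply: sF.
- move=> X [E [p [[f [wf ->]] [hp ->]]]].
  exists (Bel i p f); split; first by split.
  apply/funext => w; apply/propext; rewrite /preimage /bracket /=.
  have [M [Sig [T [th [m [ts hw]]]]]] := svalP w.
  rewrite (proj1 (val_eq ts i w m f hw wf)) hw /Dm /=.
  by split; [move=> h; split; [split|]|case].
Qed.

Lemma Tst_intro (K S I : Type) (SigS : set (set S)) (kS : kfield K S SigS)
  (inf : infinite_set [set: K]) i w A :
  SigmaOmega K S I SigS A ->
  [set w' | forall E, SigmaOmega K S I SigS E ->
     sval (Tst K S I SigS kS inf i w') E = sval (Tst K S I SigS kS inf i w) E] `<=` A ->
  sval (Tst K S I SigS kS inf i w) A = 1.
Proof.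
move=> [f [wf ->]] sub /=.
have [M [Sig [T [th [m [ts hw]]]]]] := svalP w.
rewrite (proj1 (val_eq ts i w m f hw wf)).
have [_ _ _ intro _] := ts.
apply: intro; first exact: sem_meas ts _ wf.
move=> m' hm'.
rewrite (semE ts _ wf) /preimage.
apply: (sub (phiM K S I SigS M Sig T th ts m')) => E [g [wg ->]] /=.
rewrite (proj1 (val_eq ts i (phiM K S I SigS M Sig T th ts m') m' g erefl wg)).
rewrite (proj1 (val_eq ts i w m g hw wg)).
apply: hm'; exact: sem_meas ts _ wg.
Qed.

Definition unit_mu (A : set unit) : R := if pselect (A tt) then 1 else 0.

Lemma unit_fa : fa_prob unit setT unit_mu.
Proof.
split.
- by move=> E _; rewrite /unit_mu; case: pselect => h; rewrite ?ler01 ?lexx.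
- by rewrite /unit_mu; case: pselect => // h; exfalso; exact: h.
- move=> A B _ _ dis; rewrite /unit_mu.
  case: (pselect ((A `|` B) tt)) => ab; case: (pselect (A tt)) => a;
    case: (pselect (B tt)) => b; rewrite ?addr0 ?add0r //.
  all: first [ by exfalso; case: ab | by exfalso; apply: ab; left
             | by exfalso; apply: ab; right
             | by have : (A `&` B) tt by []; rewrite dis ].
Qed.

Lemma unit_ts (K S I : Type) (SigS : set (set S)) (s0 : S) :
  is_type_space K S I SigS unit setT (fun _ _ => exist _ unit_mu unit_fa) (fun _ => s0).
Proof.
split; [by exists tt | by split | by move=> * | | by move=> *].
- move=> i m A _ sub /=; rewrite /unit_mu; case: pselect => // nA.
  by exfalso; apply: nA; case: m sub => sub; apply: sub.
Qed.

Theorem proposition4 (K S I : Type) (SigS : set (set S)) :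
  regular_infinite K ->
  (exists i : I, True) ->
  (exists s : S, True) ->
  kfield K S SigS ->
  separates_points S SigS ->
  exists (Tst : I -> OmegaT K S I SigS ->
                Delta (OmegaT K S I SigS) (SigmaOmega K S I SigS))
         (thst : OmegaT K S I SigS -> S),
    (forall (i : I) (w : OmegaT K S I SigS) (f : kexpr K S I), wff K S I SigS f ->
       sval (Tst i w) (bracket K S I SigS f)
       = sup [set p : R | 0 <= p <= 1 /\ sval w (Bel i p f)]) /\
    (forall (w : OmegaT K S I SigS) (E : set S),
       SigS E -> sval w (@Atom K S I E) -> E (thst w)) /\
    is_type_space K S I SigS (OmegaT K S I SigS) (SigmaOmega K S I SigS) Tst thst.
Proof.
move=> [inf _] [i0 _] [s0 _] kS sep.
exists (Tst K S I SigS kS inf), (thst K S I SigS).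
split; [|split].
- move=> i w f wf /=.
  have [M [Sig [T [th [m [ts hw]]]]]] := svalP w.
  by rewrite (proj1 (val_eq ts i w m f hw wf)) (proj2 (val_eq ts i w m f hw wf)).
- by move=> w E SE /(w_Atom _ _ _ _ w E sep) [].
- split.
  + by exists (phiM K S I SigS unit setT _ _ (unit_ts K S I SigS s0) tt).
  + exact: SO_kfield.
  + move=> i B; exact: Tst_meas.
  + move=> i w A; exact: Tst_intro.
  + move=> E SE; exists (Atom E); split=> //.
    apply/funext => w; apply/propext; rewrite /preimage /bracket /=.
    split; first by move=> h; apply/(w_Atom _ _ _ _ w E sep).
    by move=> /(w_Atom _ _ _ _ w E sep) [].
Qed.
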